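(* Let $m,N\in\mathbb{N}$ with $N$ square-free and $\gcd(m,N)=1$. Then there exists an integer $1\leq n\leq 2N$ with $n\neq m$ and $\gcd(n,N)=1$ such that $$\left|K(m,n,N)\right|\geq \frac{\sqrt{N}}{2^{\frac12\omega(N)+1}}.$$
   Context: For integers $a,b$ and $c\ge1$, the Kloosterman sum is $K(a,b,c)=\sum_{1\le x\le c,\ \gcd(x,c)=1} e\!\left(\frac{ax+b\overline{x}}{c}\right)$, where $\overline{x}$ is the inverse of $x$ modulo $c$ and $e(z)=e^{2\pi i z}$. $\omega(N)$ denotes the number of distinct prime factors of $N$. *)

(* Defs.v *)
From HB Require Import structures.
From mathcomp Require Import all_boot all_order all_algebra.
From mathcomp Require Import all_classical all_reals all_analysis.
From mathcomp Require Import complex.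
Set Implicit Arguments. Unset Strict Implicit. Unset Printing Implicit Defensive.
Import Order.TTheory GRing.Theory Num.Theory.
Local Open Scope ring_scope.

Definition inv_mod (x c : nat) : nat :=
  odflt 0%N (omap val [pick y : 'I_c | (x * y == 1 %[mod c])%N]).

Definition e_ {R : realType} (z : R) : R[i] :=
  ((cos (2 * pi * z)) +i* (sin (2 * pi * z)))%C.

Definition Kloosterman {R : realType} (a b : int) (c : nat) : R[i] :=
  \sum_(1 <= x < c.+1 | coprime x c)
     e_ (((a * x%:Z + b * (inv_mod x c)%:Z)%:~R : R) / c%:R).

Definition omega (N : nat) : nat := size (primes N).

Definition squarefree (N : nat) : Prop := forall p : nat, prime p -> ~~ (p ^ 2 %| N)%N.

(* Main.v *)
Require Import Defs.
From HB Require Import structures.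
From mathcomp Require Import all_boot all_order all_algebra.
From mathcomp Require Import all_classical all_reals all_analysis.
From mathcomp Require Import complex.
From mathcomp Require Import ring lra zify.
Import Order.TTheory GRing.Theory Num.Theory.
Local Open Scope ring_scope.
Set Implicit Arguments. Unset Strict Implicit. Unset Printing Implicit Defensive.

Section S.
Variable R : realType.
Local Open Scope complex_scope.

Lemma eD (s t : R) : e_ (s + t) = e_ s * e_ t.
Proof.
rewrite /e_ mulrDr cosD sinD /=; congr (_ +i* _); ring.
Qed.

Lemma e1 : e_ (1 : R) = 1.
Proof. by rewrite /e_ mulr1 mulrC mulr_natr cos2pi sin2pi. Qed.

Lemma e_nat (n : nat) : e_ (n%:R : R) = 1.
Proof.
elim: n => [|n IH]; first by rewrite /e_ mulr0 cos0 sin0.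
by rewrite -addn1 natrD eD IH e1 mulr1.
Qed.

Lemma eeJ (t : R) : e_ t * (e_ t)^* = 1.
Proof.
rewrite /e_ /=; apply/eqP; rewrite eq_complex /=; apply/andP; split; apply/eqP.
  by apply: etrans (cos2Dsin2 (2 * pi * t)); ring.
ring.
Qed.

Definition E (c k : nat) : R[i] := e_ ((k%:R : R) / c%:R).

Lemma E0 c : E c 0 = 1.
Proof. by rewrite /E mul0r -(mulr0n 1) e_nat. Qed.

Lemma ED c k1 k2 : E c (k1 + k2)%N = E c k1 * E c k2.
Proof. by rewrite /E natrD mulrDl eD. Qed.

Lemma Emul c q : (0 < c)%N -> E c (q * c)%N = 1.
Proof.
move=> c0; rewrite /E natrM mulfK ?e_nat //.
by rewrite pnatr_eq0 -lt0n.
Qed.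

Lemma EmodE c k : (0 < c)%N -> E c k = E c (k %% c).
Proof.
move=> c0; rewrite {1}(divn_eq k c) ED Emul // mul1r //.
Qed.

Lemma Econg c k1 k2 : (0 < c)%N -> (k1 = k2 %[mod c])%N -> E c k1 = E c k2.
Proof. by move=> c0 h; rewrite (EmodE k1 c0) h -EmodE. Qed.

Lemma EX c k n : E c k ^+ n = E c (k * n)%N.
Proof.
elim: n => [|n IH]; first by rewrite expr0 muln0 E0.
by rewrite exprS IH mulnS ED.
Qed.

Lemma EJ c k : (0 < c)%N -> (E c k)^* = E c (c - k %% c)%N.
Proof.
move=> c0.
have h : E c k * E c (c - k %% c) = 1.
  rewrite -ED.
  have -> : (k + (c - k %% c) = (k %/ c).+1 * c)%N.
    move: (divn_eq k c) (ltn_pmod k c0); move: (k %/ c)%N (k %% c)%N => q r.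
    move=> -> hr. rewrite mulSn. lia.
  exact: Emul.
by rewrite -[LHS]mulr1 -h mulrA [(E c k)^* * _]mulrC eeJ mul1r.
Qed.

Lemma Eneq1 c r : (0 < r < c)%N -> E c r != 1.
Proof.
case/andP=> r0 rc; have c0 : (0 < c)%N by apply: leq_trans rc.
apply/negP => /eqP h.
have hc : cos (2 * pi * ((r%:R : R) / c%:R)) = 1 by move: h; rewrite /E /e_ => -[].
set t := 2 * pi * _ in hc.
have t0 : 0 < t.
  by rewrite /t !mulr_gt0 ?pi_gt0 ?ltr0n // invr_gt0 ltr0n.
have t2 : t < pi *+ 2.
  have rc1 : (r%:R : R) / c%:R < 1 by rewrite ltr_pdivrMr ?ltr0n // mul1r ltr_nat.
  have p2 : 0 < 2 * pi :> R by rewrite mulr_gt0 ?pi_gt0.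
  move: rc1; rewrite -(ltr_pM2l p2) mulr1 /t. by rewrite mulr_natl.
have cosl : forall y : R, (0 < y) && (y <= pi) -> cos y < 1.
  move=> y /andP[y0 ypi]; rewrite -cos0 ltr_cos ?in_itv //= ?lexx ?pi_ge0 ?y0 ?ypi //.
  by rewrite (ltW y0).
case: (lerP t pi) => tpi.
  by move: (cosl t); rewrite t0 tpi hc ltxx => /(_ isT).
have : cos (pi *+ 2 - t) < 1 by apply: cosl; rewrite subr_gt0 t2 /= lerBlDr -[pi *+ 2]/(pi + pi) lerD2l ltW.
by rewrite -cosN opprB -(cosD2pi (t - pi *+ 2)) subrK hc ltxx.
Qed.

Lemma orth c k : (0 < c)%N ->
  \sum_(n < c) E c (n * k)%N = if (c %| k)%N then c%:R else 0.
Proof.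
move=> c0; case: ifP => ck.
  rewrite (eq_bigr (fun _ => 1)); last first.
    move=> n _; case/dvdnP: ck => q ->. rewrite mulnA; exact: Emul.
  by rewrite sumr_const card_ord.
have hz : E c k != 1.
  rewrite (EmodE k c0) Eneq1 // ltn_pmod // andbT lt0n.
  by rewrite -/(dvdn c k) ck.
have : (E c k - 1) * \sum_(n < c) E c k ^+ n = 0.
  by rewrite -subrX1 EX Emul // subrr.
move/eqP; rewrite mulf_eq0 subr_eq0 (negbTE hz) /= => /eqP h.
by rewrite -[RHS]h; apply: eq_bigr => n _; rewrite EX mulnC.
Qed.


Lemma mod_one c a b : (a = 1 %[mod c])%N -> (a * b = b %[mod c])%N.
Proof. by move=> h; rewrite -modnMml h modnMml mul1n. Qed.

Lemma inv_modP x c : (0 < c)%N -> coprime x c -> (x * inv_mod x c = 1 %[mod c])%N.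
Proof.
move=> c0 cx.
have ex : exists y : 'I_c, (x * y == 1 %[mod c])%N.
  case: (posnP x) => [x0 | xp].
    move: cx; rewrite x0 /coprime gcd0n => /eqP c1; move: (c1) => c1'.
    by exists (Ordinal c0); rewrite mul0n; subst c.
  case/(coprimeP _ xp): cx => [[u1 u2]] /= hu.
  exists (Ordinal (ltn_pmod u1 c0)) => /=.
  rewrite modnMmr.
  have -> : (x * u1 = u2 * c + 1)%N by lia.
  by rewrite modnMDl.
rewrite /inv_mod; case: pickP => [y /eqP hy | none] //=.
by case: ex => y hy; move: (none y); rewrite hy.
Qed.

Definition term (a b c x : nat) : R[i] := E c (a * x + b * inv_mod x c)%N.

Lemma term_any a b c x y : (0 < c)%N -> coprime x c -> (x * y = 1 %[mod c])%N ->
  term a b c x = E c (a * x + b * y)%N.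
Proof.
move=> c0 cx hy; apply: Econg => //.
have hi : (inv_mod x c = y %[mod c])%N.
  rewrite -(mod_one (inv_mod x c) hy) -[in RHS](mod_one y (inv_modP c0 cx)).
  by rewrite mulnAC.
by rewrite -modnDmr -modnMmr hi modnMmr modnDmr.
Qed.

Definition Kn (a b c : nat) : R[i] := \sum_(x < c | coprime x c) term a b c x.

Lemma Kcong a b1 b2 c : (0 < c)%N -> (b1 = b2 %[mod c])%N -> Kn a b1 c = Kn a b2 c.
Proof.
move=> c0 hb; apply: eq_bigr => x _; apply: Econg => //.
by rewrite -modnDmr -modnMml hb modnMml modnDmr.
Qed.

Lemma Esplit p M u v k : (0 < p)%N -> (0 < M)%N ->
  (u * M + v * p = 1 %[mod p * M])%N -> E (p * M) k = E p (u * k) * E M (v * k).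
Proof.
move=> p0 M0 h.
rewrite /E -eD.
have -> : (u * k)%N%:R / p%:R + (v * k)%N%:R / M%:R = (k * (u * M + v * p))%N%:R / (p * M)%N%:R :> R.
  rewrite !natrM natrD !natrM; field.
  by rewrite !pnatr_eq0 -!lt0n p0 M0.
rewrite -/(E _ _); apply: Econg; first by rewrite muln_gt0 p0.
by rewrite -modnMmr h modnMmr muln1.
Qed.


Lemma term_split a b p M u v x : (0 < p)%N -> (0 < M)%N ->
  (u * M + v * p = 1 %[mod p * M])%N -> coprime x (p * M) ->
  term a b (p * M) x = term (u * a) (u * b) p (x %% p) * term (v * a) (v * b) M (x %% M).
Proof.
move=> p0 M0 huv cx.
have pM0 : (0 < p * M)%N by rewrite muln_gt0 p0.
have hi := inv_modP pM0 cx.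
set xi := inv_mod x (p * M) in hi *.
move: (cx); rewrite coprimeMr => /andP[cxp cxM].
rewrite (@term_any _ _ p _ xi) //; last 2 first.
- by rewrite coprime_modl.
- by rewrite modnMml -(modn_dvdm _ (dvdn_mulr M (dvdnn p))) hi (modn_dvdm _ (dvdn_mulr M (dvdnn p))).
rewrite (@term_any _ _ M _ xi) //; last 2 first.
- by rewrite coprime_modl.
- by rewrite modnMml -(modn_dvdm _ (dvdn_mull p (dvdnn M))) hi (modn_dvdm _ (dvdn_mull p (dvdnn M))).
rewrite /term (Esplit _ p0 M0 huv); congr (_ * _); apply: Econg => //.
  by rewrite -/xi -[in RHS]modnDml modnMmr modnDml mulnDr !mulnA.
by rewrite -/xi -[in RHS]modnDml modnMmr modnDml mulnDr !mulnA.
Qed.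

Lemma Kmul a b p M : (0 < p)%N -> (0 < M)%N -> coprime p M ->
  Kn a b (p * M) = Kn (inv_mod M p * a) (inv_mod M p * b) p
                 * Kn (inv_mod p M * a) (inv_mod p M * b) M.
Proof.
move=> p0 M0 cpM.
set u := inv_mod M p; set v := inv_mod p M.
have pM0 : (0 < p * M)%N by rewrite muln_gt0 p0.
have huv : (u * M + v * p = 1 %[mod p * M])%N.
  apply/eqP; rewrite chinese_remainder //; apply/andP; split; apply/eqP.
    rewrite addnC modnMDl mulnC; apply: inv_modP => //; by rewrite coprime_sym.
  rewrite modnMDl mulnC; exact: inv_modP.
rewrite /Kn big_distrlr /= pair_big_dep /=.
pose h (x : 'I_(p * M)) : 'I_p * 'I_M := (Ordinal (ltn_pmod x p0), Ordinal (ltn_pmod x M0)).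
pose h' (ij : 'I_p * 'I_M) : 'I_(p * M) := Ordinal (ltn_pmod (chinese p M ij.1 ij.2) pM0).
have hK : cancel h h'.
  move=> x; apply: val_inj => /=.
  by rewrite -(chinese_mod cpM x) modn_small.
have h'K : cancel h' h.
  move=> [i j]; congr (_, _); apply: val_inj => /=.
    by rewrite (modn_dvdm _ (dvdn_mulr M (dvdnn p))) chinese_modl // modn_small.
  by rewrite (modn_dvdm _ (dvdn_mull p (dvdnn M))) chinese_modr // modn_small.
rewrite (reindex h); last by apply: onW_bij; exists h'.
apply: eq_big => x /=.
  by rewrite !coprime_modl coprimeMr.
move=> cx; exact: term_split.
Qed.


Lemma sum_cop_prime p (F : nat -> R[i]) : prime p ->
  \sum_(x < p | coprime x p) F x = \sum_(i < p.-1) F i.+1.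
Proof.
move=> pp; have p0 := prime_gt0 pp.
case: p pp p0 => // p' pp _ /=.
rewrite big_mkcond big_ord_recl /=.
have -> : coprime 0 p'.+1 = false.
  by rewrite /coprime gcd0n; apply/negbTE; move: (prime_gt1 pp); case: p' {pp} => [|[]].
rewrite add0r; apply: eq_bigr => i _.
have -> // : coprime (bump 0 i) p'.+1.
rewrite coprime_sym prime_coprime // /bump /= add1n.
by apply/negP => /dvdn_leq => /(_ isT); rewrite ltnNge ltn_ord.
Qed.

Lemma EJ' p k : (0 < p)%N -> (E p k)^* = E p (k * p.-1)%N.
Proof.
move=> p0.
have h : E p k * E p (k * p.-1)%N = 1.
  by rewrite -ED -{1}(muln1 k) -mulnDr add1n prednK // Emul.
by rewrite -[LHS]mulr1 -h mulrA [(E p k)^* * _]mulrC eeJ mul1r.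
Qed.

Lemma EJn p k : (0 < p)%N -> Num.conj (E p k) = E p (k * p.-1)%N.
Proof. exact: EJ'. Qed.

Lemma eeJn (t : R) : e_ t * Num.conj (e_ t) = 1.
Proof. exact: eeJ. Qed.

Lemma inv_eq p (x y : nat) : prime p -> (x < p)%N -> (y < p)%N -> coprime x p -> coprime y p ->
  (p %| inv_mod x p + inv_mod y p * p.-1)%N = (x == y).
Proof.
move=> pp xp yp cx cy; have p0 := prime_gt0 pp.
set xi := inv_mod x p; set yi := inv_mod y p.
have hx : (x * xi = 1 %[mod p])%N by exact: inv_modP.
have hy : (y * yi = 1 %[mod p])%N by exact: inv_modP.
have -> : (p %| xi + yi * p.-1)%N = (xi == yi %[mod p])%N.
  rewrite (_ : (p %| xi + yi * p.-1)%N = (xi + yi * p.-1 == 0 %[mod p])%N); last by rewrite /dvdn mod0n.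
  rewrite -(eqn_modDr yi) add0n -addnA -{2}(muln1 yi) -mulnDr addn1 prednK //.
  by rewrite [(xi + _)%N]addnC modnMDl.
apply/idP/idP => [/eqP h | /eqP exy]; last by rewrite /xi /yi exy.
have hxy : (x * yi = 1 %[mod p])%N by rewrite -modnMmr -h modnMmr.
apply/eqP; rewrite -(modn_small xp) -(modn_small yp).
rewrite -(mod_one x hy) -(mod_one y hxy).
have -> : (y * yi * x = x * yi * y)%N by ring. by [].
Qed.

Definition nrm2 (z : R[i]) : R := complex.Re z ^+ 2 + complex.Im z ^+ 2.

Lemma nrm2E z : z * z^* = (nrm2 z)%:C.
Proof.
case: z => a b; rewrite /nrm2 /=; apply/eqP; rewrite eq_complex /=; apply/andP; split; apply/eqP; ring.
Qed.

Lemma nrm2M z w : nrm2 (z * w) = nrm2 z * nrm2 w.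
Proof. case: z => a b; case: w => c d; rewrite /nrm2 /=; ring. Qed.

Lemma nrm2_ge0 z : 0 <= nrm2 z.
Proof. by rewrite /nrm2 addr_ge0 ?sqr_ge0. Qed.


Lemma K0 p a : prime p -> coprime a p -> Kn a 0 p = -1.
Proof.
move=> pp cap; have p0 := prime_gt0 pp.
rewrite /Kn (sum_cop_prime (fun x => term a 0 p x)) //.
have h : \sum_(n < p) E p (n * a)%N = 0.
  rewrite orth // ifF //; apply/negbTE; by rewrite -prime_coprime // coprime_sym.
move: h; case: p pp p0 cap => // p' pp _ cap /=.
rewrite big_ord_recl /= mul0n E0 => /eqP; rewrite addrC addr_eq0 => /eqP <-.
apply: eq_bigr => i _.
by rewrite /term mul0n addn0 mulnC.
Qed.

Lemma conjcD (z w : R[i]) : (z + w)^* = z^* + w^*.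
Proof. by case: z => a b; case: w => c d; rewrite /= opprD. Qed.

Lemma conjcMul (z w : R[i]) : (z * w)^* = z^* * w^*.
Proof.
case: z => a b; case: w => c d; apply/eqP; rewrite eq_complex /=; apply/andP; split; apply/eqP; ring.
Qed.

Lemma conjc_sum (I : Type) (r : seq I) (P : pred I) (F : I -> R[i]) :
  (\sum_(i <- r | P i) F i)^* = \sum_(i <- r | P i) (F i)^*.
Proof.
apply: (big_morph (fun z : R[i] => z^*)); first exact: conjcD.
by apply/eqP; rewrite eq_complex /= oppr0 !eqxx.
Qed.

Lemma moment2 p a : prime p ->
  \sum_(n < p) Kn a n p * (Kn a n p)^* = (p * p.-1)%N%:R.
Proof.
move=> pp; have p0 := prime_gt0 pp.
have step : forall n : 'I_p, Kn a n p * (Kn a n p)^* =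
   \sum_(x < p | coprime x p) \sum_(y < p | coprime y p)
      (E p (a * x)%N * (E p (a * y)%N)^* * E p (n * (inv_mod x p + inv_mod y p * p.-1))%N).
  move=> n; rewrite /Kn rmorph_sum big_distrlr; apply: eq_bigr => x _; apply: eq_bigr => y _.
  rewrite /term !ED rmorphM /= !(EJn _ p0) -!ED; congr (E p _); ring.
rewrite (eq_bigr _ (fun n _ => step n)) exchange_big /=.
rewrite (eq_bigr (fun x : 'I_p => p%:R)).
  rewrite (sum_cop_prime (fun _ => p%:R)) // sumr_const card_ord natrM mulr_natr //.
move=> x cx; rewrite exchange_big /=.
rewrite (eq_bigr (fun y : 'I_p => if y == x then p%:R else 0)).
  rewrite (bigD1 x) //= eqxx big1 ?addr0 // => i /andP[_ /negbTE ->] //.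
move=> y cy; rewrite -big_distrr /= orth // inv_eq //.
have -> : (nat_of_ord x == nat_of_ord y) = (y == x) by rewrite eq_sym.
case: eqP => [-> | _]; last by rewrite mulr0.
by rewrite /E eeJn mul1r.
Qed.


Lemma cop_of_inv x y c : (x * y = 1 %[mod c])%N -> coprime y c.
Proof.
move=> h; have : coprime (x * y) c by rewrite -coprime_modl h coprime_modl coprime1n.
by rewrite coprimeMl => /andP[].
Qed.

Lemma sumC (I : Type) (r : seq I) (P : pred I) (F : I -> R) :
  \sum_(i <- r | P i) (F i)%:C = (\sum_(i <- r | P i) F i)%:C.
Proof.
apply: (big_rec2 (fun x y => x = y%:C)) => // i x y _ ->.
by apply/eqP; rewrite eq_complex /= addr0 !eqxx.
Qed.

Lemma natC (k : nat) : ((k%:R : R)%:C) = k%:R.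
Proof.
elim: k => [|k IH] //; rewrite -addn1 !natrD -IH.
by apply/eqP; rewrite eq_complex /= addr0 !eqxx.
Qed.

Lemma Kprime p a b : prime p -> coprime a p -> coprime b p ->
  exists n, coprime n p /\ p%:R / 2 <= nrm2 (Kn a (b * n) p).
Proof.
move=> pp cap cbp; have p0 := prime_gt0 pp; have p1 := prime_gt1 pp.
have hm := moment2 a pp.
rewrite (eq_bigr (fun n : 'I_p => (nrm2 (Kn a n p))%:C)) in hm; last first.
  by move=> n _; rewrite nrm2E.
rewrite sumC in hm.
have hm' : \sum_(n < p) nrm2 (Kn a n p) = (p * p.-1)%N%:R.
  by apply: complexI; rewrite hm natC.
have bi := inv_modP p0 cbp.
suff [n' [n'p cn' hn']] : exists n' : nat, [/\ (n' < p)%N, coprime n' p & p%:R / 2 <= nrm2 (Kn a n' p)].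
  exists (inv_mod b p * n')%N; split.
    by rewrite coprimeMl cn' andbT; apply: cop_of_inv bi.
  rewrite (@Kcong a _ n') // mulnA; exact: mod_one.
move: hm'; clear hm bi; case: p pp p0 p1 cap cbp => // p' pp _ p1 cap cbp /=.
rewrite big_ord_recl /= K0 //.
under eq_bigr do rewrite /bump /= add1n.
case: (boolP [exists i : 'I_p', p'.+1%:R / 2 <= nrm2 (Kn a i.+1 p'.+1)]).
  case/existsP => i hi _; exists i.+1; split => //.
    by rewrite ltnS.
  rewrite coprime_sym prime_coprime //; apply/negP => /dvdn_leq => /(_ isT).
    move=> h; have := ltn_ord i; lia.
rewrite negb_exists => /forallP hn.
have p'0 : (0 < p')%N by [].
have hs : \sum_(i < p') nrm2 (Kn a i.+1 p'.+1) < \sum_(i < p') (p'.+1%:R / 2 : R).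
  apply: ltr_sum; first by apply/hasP; exists (Ordinal p'0); rewrite ?mem_index_enum.
  by move=> i _; rewrite ltNge hn.
rewrite sumr_const card_ord in hs.
have n1 : nrm2 (-1 : R[i]) = 1 by rewrite /nrm2 /=; ring.
rewrite n1 => h.
have : ((p'.+1 * p')%N%:R : R) - 1 < p'.+1%:R / 2 *+ p' by rewrite -h addrC addKr.
rewrite -mulr_natr natrM.
have hp : (1 : R) <= p'%:R by rewrite ler1n.
set P := (p'.+1%:R : R); set Q := (p'%:R : R).
have hP : P = Q + 1 by rewrite /P /Q -addn1 natrD.
rewrite hP => hh.
nra.
Qed.


Lemma omegaM p M : prime p -> (0 < M)%N -> ~~ (p %| M)%N -> omega (p * M) = (omega M).+1.
Proof.
move=> pp M0 npM; rewrite /omega.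
have -> : size (primes (p * M)) = size (p :: primes M).
  apply: perm_size; apply: uniq_perm.
  - exact: primes_uniq.
  - by rewrite /= primes_uniq andbT mem_primes pp M0 /= npM.
  - by move=> q; rewrite (primesM _ (prime_gt0 pp) M0) primes_prime // !inE.
by [].
Qed.

Lemma Kone a b : Kn a b 1 = 1.
Proof.
rewrite /Kn big_mkcond big_ord1 /= /term (EmodE _ (isT : (0 < 1)%N)) modn1.
exact: E0.
Qed.

Lemma mainQ N : (0 < N)%N -> squarefree N -> forall a b, coprime a N -> coprime b N ->
  exists n, coprime n N /\ N%:R / (2%:R ^+ omega N) <= nrm2 (Kn a (b * n)%N N).
Proof.
elim: N {-2}N (leqnn N) => [|K IH] N hNK N0 sqf a b caN cbN.
  by case: N hNK N0 {sqf caN cbN}.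
case: (ltnP 1 N) => N1; last first.
  have -> : N = 1%N by apply/eqP; rewrite eqn_leq N1 N0.
  exists 0%N; split => //.
  rewrite Kone /omega /= expr0 divr1 /nrm2 /=; lra.
set p := pdiv N.
have pp : prime p := pdiv_prime N1.
have p0 := prime_gt0 pp; have p1 := prime_gt1 pp.
set M := (N %/ p)%N.
have NpM : N = (p * M)%N by rewrite /M mulnC divnK // pdiv_dvd.
have M0 : (0 < M)%N by move: N0; rewrite NpM muln_gt0 => /andP[].
have npM : ~~ (p %| M)%N.
  apply/negP => /dvdnP [q hq]; move: (sqf p pp); rewrite NpM hq.
  have e : (p * (q * p) = p ^ 2 * q)%N by rewrite expnS expn1; lia.
  by rewrite e dvdn_mulr.
have cpM : coprime p M by rewrite prime_coprime.
have MK : (M <= K)%N.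
  rewrite -ltnS; apply: leq_trans hNK; rewrite NpM -{1}(mul1n M) ltn_mul2r M0 //.
have sqM : squarefree M.
  move=> q qp; apply/negP => h; move: (sqf q qp); rewrite NpM.
  by rewrite (dvdn_trans h) // dvdn_mull.
move: caN cbN; rewrite NpM !coprimeMr => /andP[cap caM] /andP[cbp cbM].
set u := inv_mod M p; set v := inv_mod p M.
have hu : (M * u = 1 %[mod p])%N by apply: inv_modP; rewrite // coprime_sym.
have hv : (p * v = 1 %[mod M])%N by apply: inv_modP.
have cu : coprime u p := cop_of_inv hu.
have cv : coprime v M := cop_of_inv hv.
have c1 : coprime (u * a) p by rewrite coprimeMl cu cap.
have c2 : coprime (u * b) p by rewrite coprimeMl cu cbp.
have c3 : coprime (v * a) M by rewrite coprimeMl cv caM.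
have c4 : coprime (v * b) M by rewrite coprimeMl cv cbM.
have [n1 [cn1 h1]] := @Kprime p (u * a)%N (u * b)%N pp c1 c2.
have [n2 [cn2 h2]] := IH M MK M0 sqM (v * a)%N (v * b)%N c3 c4.
exists (chinese p M n1 n2); split.
  rewrite coprimeMr -coprime_modl chinese_modl // coprime_modl cn1 /=.
  by rewrite -coprime_modl chinese_modr // coprime_modl.
rewrite Kmul // nrm2M omegaM // exprS natrM.
rewrite (@Kcong _ _ (u * b * n1) p) //; last first.
  by rewrite mulnA -modnMmr chinese_modl // modnMmr.
rewrite (@Kcong _ (v * (b * chinese p M n1 n2)) (v * b * n2) M) //; last first.
  by rewrite mulnA -modnMmr chinese_modr // modnMmr.
rewrite -/u -/v invfM mulrACA.
by apply: ler_pM => //; rewrite divr_ge0 ?exprn_ge0 ?ler0n.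
Qed.


Lemma Kl_eq (m n N : nat) : (0 < N)%N -> @Kloosterman R m%:Z n%:Z N = Kn m n N.
Proof.
move=> N0; rewrite /Kloosterman.
rewrite (eq_bigr (fun x => term m n N x)); last first.
  by move=> x _; rewrite -!PoszM -PoszD.
case: (ltnP 1 N) => N1; last first.
  have e1 : N = 1%N by apply/eqP; rewrite eqn_leq N1 N0.
  subst N; rewrite Kone big_mkcond big_nat1 /= /term (EmodE _ (isT : (0 < 1)%N)) modn1.
  exact: E0.
have nc : forall x, (x == 0)%N || (x == N) -> coprime x N = false.
  move=> x /orP[] /eqP ->; rewrite /coprime ?gcd0n ?gcdnn; apply/negbTE; rewrite neq_ltn N1 ?orbT //.
rewrite /Kn -(big_mkord (fun x => coprime x N) (fun x => term m n N x)).
rewrite big_mkcond [RHS]big_mkcond big_nat_recr //= [RHS]big_ltn //= !nc ?eqxx ?orbT //.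
by rewrite addr0 add0r.
Qed.

End S.

Lemma pick_rep (m N n0 : nat) : (0 < N)%N ->
  exists c, [/\ (1 <= c <= 2 * N)%N, c != m & (c = n0 %[mod N])%N].
Proof.
move=> N0; set r := (n0 %% N)%N; have rN : (r < N)%N by rewrite ltn_pmod.
case: (eqVneq m (r + N)%N) => hm.
  case: (eqVneq r 0%N) => hr.
    exists (2 * N)%N; split.
    - lia.
    - lia.
    - by rewrite modnMl -/r hr.
  exists r; split.
  - lia.
  - lia.
  - by rewrite modn_small.
exists (r + N)%N; split.
- lia.
- by rewrite eq_sym.
- by rewrite modnDr modn_mod.
Qed.

Unset Implicit Arguments. Set Strict Implicit.

Theorem lemma3 (R : realType) (m N : nat) :
  (0 < m)%N -> (0 < N)%N -> squarefree N -> coprime m N ->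
  exists n : nat,
    [/\ (1 <= n <= 2 * N)%N, n != m, coprime n N &
      ((Num.sqrt (N%:R : R) / powR 2 ((omega N)%:R / 2 + 1))%:C%C
         <= `| @Kloosterman R m%:Z n%:Z N |)].
Proof.
move=> m0 N0 sqf cmN.
have [n0 [cn0 hb]] := @mainQ R N N0 sqf m 1%N cmN (coprime1n N).
rewrite mul1n in hb.
have [c [hc1 hc2 hc3]] := pick_rep m n0 N0.
exists c; split => //.
  by rewrite -coprime_modl hc3 coprime_modl.
rewrite Kl_eq // (@Kcong _ m c n0 N) // normc_def lecR.
set K := Kn _ m n0 N in hb *.
have -> : complex.Re K ^+ 2 + complex.Im K ^+ 2 = nrm2 K by [].
set w := omega N.
set P := powR 2 ((w%:R : R) / 2 + 1).
have P0 : 0 < P by rewrite /P powR_gt0.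
have P2 : P ^+ 2 = 2%:R ^+ w * 4%:R.
  rewrite expr2 /P -powRD; last by apply/implyP => _; rewrite pnatr_eq0.
  have -> : ((w%:R : R) / 2 + 1 + (w%:R / 2 + 1)) = (w + 2)%N%:R by rewrite natrD; field.
  by rewrite powR_mulrn ?ler0n // exprD expr2 -natrM.
set A := Num.sqrt (N%:R : R) / P.
have A0 : 0 <= A by rewrite /A divr_ge0 ?sqrtr_ge0 // ltW.
have -> : A = Num.sqrt (A ^+ 2) by rewrite sqrtr_sqr ger0_norm.
rewrite ler_sqrt ?nrm2_ge0 //.
apply: le_trans hb.
rewrite /A expr_div_n sqr_sqrtr ?ler0n // P2 invfM mulrA.
have X0 : 0 <= (N%:R : R) / 2%:R ^+ w by rewrite divr_ge0 ?exprn_ge0 ?ler0n.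
set Y := _ / _ in X0 *.
lra.
Qed.
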